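(* Let $\mathbb{X}$ be a finite set, $\mathcal{H}_A$ a finite-dimensional Hilbert space, and $\{\rho_A^x\}_{x\in\mathbb{X}}$ density operators on $\mathcal{H}_A$. Define the barycentric quantum Rényi leakage \[ \mathcal{B}(X\rightarrow A)_{\rho_A}=\min_{\pi\in\Delta(\mathbb{X})}\max_{x\in\mathbb{X}}\widetilde{D}_\infty\Big(\rho_A^x\,\Big\|\,\sum_{x'\in\mathbb{X}}\pi(x')\rho_A^{x'}\Big). \] Then: (a) $\mathcal{B}(X\rightarrow A)_{\rho_A}\geq 0$, with equality if and only if $\rho_A^x=\rho_A^{x'}$ for all $x,x'\in\mathbb{X}$; (b) for any unitary $U$ on $\mathcal{H}_A$, the barycentric quantum Rényi leakage of the family $\{U\rho_A^xU^\dagger\}_{x\in\mathbb{X}}$ equals that of $\{\rho_A^x\}_{x\in\mathbb{X}}$; (c) for any quantum channel $\mathcal{E}$ (completely positive trace-preserving map) with domain the operators on $\mathcal{H}_A$, the barycentric quantum Rényi leakage of the family $\{\mathcal{E}(\rho_A^x)\}_{x\in\mathbb{X}}$ is at most that of $\{\rho_A^x\}_{x\in\mathbb{X}}$.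
   Context: All logarithms are base 2. $\Delta(\mathbb{X})$ is the set of probability mass functions on $\mathbb{X}$. For a density operator $\rho$ and positive semi-definite $\sigma$, $\widetilde{D}_\infty(\rho\|\sigma)=\log\big(\inf\{\mu\in\mathbb{R}:\rho\leq\mu\sigma\}\big)$, equal to $+\infty$ if the support of $\rho$ is not contained in that of $\sigma$. *)

(* Defs.v *)
From HB Require Import structures.
From mathcomp Require Import all_boot all_order all_algebra.
From mathcomp Require Import spectral.
From mathcomp Require Import complex mxtens.
From mathcomp Require Import classical_sets boolp reals constructive_ereal ereal exp.

Set Implicit Arguments.
Unset Strict Implicit.
Unset Printing Implicit Defensive.

Import Order.TTheory GRing.Theory Num.Theory.
Local Open Scope ring_scope.
Local Open Scope classical_set_scope.
Local Open Scope sesquilinear_scope.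

(* Hilbert space H_A = C^n, C = R[i] with R : realType; operators are 'M[R[i]]_n. *)

Definition psdmx (R : realType) (n : nat) (A : 'M[R[i]]_n) : Prop :=
  A ^t* = A /\ forall v : 'cV[R[i]]_n, 0 <= (v ^t* *m A *m v) 0 0.

Definition loewner_le (R : realType) (n : nat) (A B : 'M[R[i]]_n) : Prop :=
  psdmx (B - A).

Definition density (R : realType) (n : nat) (rho : 'M[R[i]]_n) : Prop :=
  psdmx rho /\ \tr rho = 1.

Definition log2 (R : realType) (x : R) : R := ln x / ln 2.

(* max-relative entropy  D~_oo(rho || sigma) = log (inf {mu : rho <= mu sigma}),
   +oo when no such mu exists (support of rho not contained in that of sigma) *)
Definition Dmax (R : realType) (n : nat) (rho sigma : 'M[R[i]]_n) : \bar R :=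
  let S := [set mu : R | loewner_le rho ((mu%:C)%C *: sigma)] in
  if `[< S !=set0 >] then (log2 (inf S))%:E else +oo%E.

Definition pmf (R : realType) (X : finType) (pi : X -> R) : Prop :=
  (forall x, 0 <= pi x) /\ \sum_(x : X) pi x = 1.

Definition leakage (R : realType) (X : finType) (n : nat) (rho : X -> 'M[R[i]]_n)
  : \bar R :=
  ereal_inf [set (\big[Order.max/-oo%E]_(x : X)
                    Dmax (rho x) (\sum_(x' : X) ((pi x')%:C)%C *: rho x'))%E
            | pi in [set pi : X -> R | pmf pi]].

(* k x k block (i,j) (each n x n) of an operator on C^k (x) C^n *)
Definition block (R : realType) (k n : nat) (M : 'M[R[i]]_(k * n)) (i j : 'I_k)
  : 'M[R[i]]_n :=
  \matrix_(a, b) M (mxtens_index (i, a)) (mxtens_index (j, b)).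

(* (id_k (x) E) applied to M *)
Definition ampliation (R : realType) (k n m : nat)
  (E : 'M[R[i]]_n -> 'M[R[i]]_m) (M : 'M[R[i]]_(k * n)) : 'M[R[i]]_(k * m) :=
  \sum_(i < k) \sum_(j < k) tensmx (delta_mx i j : 'M[R[i]]_k) (E (block M i j)).

Definition completely_positive (R : realType) (n m : nat)
  (E : 'M[R[i]]_n -> 'M[R[i]]_m) : Prop :=
  forall (k : nat) (M : 'M[R[i]]_(k * n)), psdmx M -> psdmx (ampliation E M).

Definition trace_preserving (R : realType) (n m : nat)
  (E : 'M[R[i]]_n -> 'M[R[i]]_m) : Prop :=
  forall A : 'M[R[i]]_n, \tr (E A) = \tr A.

Definition quantum_channel (R : realType) (n m : nat)
  (E : {linear 'M[R[i]]_n -> 'M[R[i]]_m}) : Prop :=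
  completely_positive E /\ trace_preserving E.

(* Main.v *)
Set Warnings "-all".
Require Import Defs.
From HB Require Import structures.
From mathcomp Require Import all_boot all_order all_algebra.
From mathcomp Require Import spectral.
From mathcomp Require Import complex mxtens.
From mathcomp Require Import classical_sets boolp reals constructive_ereal ereal exp.
From mathcomp Require Import ring lra.
Import Order.TTheory GRing.Theory Num.Theory.
Local Open Scope ring_scope.
Local Open Scope sesquilinear_scope.
Set Implicit Arguments. Unset Strict Implicit. Unset Printing Implicit Defensive.
Local Open Scope classical_set_scope.
Section Mx.
Variable R : realType.
Local Notation C := (R[i]).

Definition bf (n : nat) (A : 'M[C]_n) (u w : 'cV[C]_n) : C := (u ^t* *m A *m w) 0 0.
Definition qf (n : nat) (A : 'M[C]_n) (v : 'cV[C]_n) : C := bf A v v.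

Lemma trC_mul p q r (A : 'M[C]_(p, q)) (B : 'M[C]_(q, r)) :
  (A *m B) ^t* = B ^t* *m A ^t*.
Proof. by rewrite trmx_mul map_mxM. Qed.

Lemma trC_add p q (A B : 'M[C]_(p, q)) : (A + B) ^t* = A ^t* + B ^t*.
Proof. by rewrite linearD map_mxD. Qed.

Lemma trC_scale p q (c : C) (A : 'M[C]_(p, q)) : (c *: A) ^t* = c^* *: A ^t*.
Proof. by rewrite linearZ map_mxZ. Qed.

Lemma bfDl n (A : 'M[C]_n) u u' w : bf A (u + u') w = bf A u w + bf A u' w.
Proof. by rewrite /bf trC_add !mulmxDl mxE. Qed.

Lemma bfDr n (A : 'M[C]_n) u w w' : bf A u (w + w') = bf A u w + bf A u w'.
Proof. by rewrite /bf !mulmxDr mxE. Qed.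

Lemma bfZl n (A : 'M[C]_n) c u w : bf A (c *: u) w = c^* * bf A u w.
Proof. by rewrite /bf trC_scale -!scalemxAl mxE. Qed.

Lemma bfZr n (A : 'M[C]_n) c u w : bf A u (c *: w) = c * bf A u w.
Proof. by rewrite /bf -!scalemxAr mxE. Qed.

Lemma bfMD n (A B : 'M[C]_n) u w : bf (A + B) u w = bf A u w + bf B u w.
Proof. by rewrite /bf mulmxDr mulmxDl mxE. Qed.

Lemma bfMZ n (A : 'M[C]_n) c u w : bf (c *: A) u w = c * bf A u w.
Proof. by rewrite /bf -scalemxAr -scalemxAl mxE. Qed.

Lemma bfMN n (A : 'M[C]_n) u w : bf (- A) u w = - bf A u w.
Proof. by rewrite -scaleN1r bfMZ mulN1r. Qed.

Lemma bfMB n (A B : 'M[C]_n) u w : bf (A - B) u w = bf A u w - bf B u w.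
Proof. by rewrite bfMD bfMN. Qed.

Lemma trC_delta n (a : 'I_n) : (delta_mx a 0 : 'cV[C]_n) ^t* = delta_mx 0 a.
Proof. by rewrite trmx_delta map_delta_mx. Qed.

Lemma bf_delta n (A : 'M[C]_n) a b : bf A (delta_mx a 0) (delta_mx b 0) = A a b.
Proof. by rewrite /bf trC_delta -colE -rowE !mxE. Qed.

Lemma psd_diag n (A : 'M[C]_n) a : psdmx A -> 0 <= A a a.
Proof. by case=> _ /(_ (delta_mx a 0)); rewrite -[_ 0 0]/(bf A _ _) bf_delta. Qed.

Lemma psd_tr n (A : 'M[C]_n) : psdmx A -> 0 <= \tr A.
Proof. by move=> pA; apply: sumr_ge0 => i _; apply: psd_diag. Qed.

Lemma psd_diag_le n (A : 'M[C]_n) a : psdmx A -> A a a <= \tr A.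
Proof.
move=> pA; rewrite /mxtrace (bigD1 a) //= lerDl.
by apply: sumr_ge0 => i _; apply: psd_diag.
Qed.

Lemma qf_psd n (A : 'M[C]_n) v : psdmx A -> 0 <= qf A v.
Proof. by case=> _ /(_ v). Qed.

Lemma qf_expand n (A : 'M[C]_n) a b c :
  qf A (delta_mx a 0 + c *: delta_mx b 0) =
  A a a + c * A a b + c^* * A b a + c^* * c * A b b.
Proof.
rewrite /qf bfDl !bfDr !bfZl !bfZr !bf_delta.
by rewrite mulrA !addrA.
Qed.

Lemma qf_bound n (A : 'M[C]_n) a b c : psdmx A -> `|c| <= 1 ->
  qf A (delta_mx a 0 + c *: delta_mx b 0) <= 4%:R * \tr A.
Proof.
move=> pA c1.
have h2 := qf_psd (delta_mx a 0 + (- c) *: delta_mx b 0) pA.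
have E : qf A (delta_mx a 0 + c *: delta_mx b 0) +
         qf A (delta_mx a 0 + (- c) *: delta_mx b 0) =
         2%:R * A a a + 2%:R * ((c * c^*) * A b b).
  rewrite !qf_expand rmorphN /=. ring.
apply: (le_trans (y := qf A (delta_mx a 0 + c *: delta_mx b 0) +
         qf A (delta_mx a 0 + (- c) *: delta_mx b 0))).
  by rewrite lerDl.
rewrite E.
have cc : c * c^* <= 1 by rewrite -normCK; apply: exprn_ile1.
have cc0 : 0 <= c * c^* by rewrite -normCK; apply: exprn_ge0.
have hb : c * c^* * A b b <= \tr A.
  apply: le_trans (psd_diag_le b pA).
  by apply: ler_piMl => //; apply: psd_diag.
have ha := psd_diag_le a pA.
have -> : (4%:R : C) * \tr A = 2%:R * \tr A + 2%:R * \tr A.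
  by rewrite -mulrDl -natrD.
by apply: lerD; apply: ler_wpM2l => //; apply: ler0n.
Qed.

Lemma polarize n (D : 'M[C]_n) :
  (forall a b c, `|c| <= 1 -> qf D (delta_mx a 0 + c *: delta_mx b 0) = 0) ->
  D = 0.
Proof.
move=> H; apply/matrixP => a b; rewrite mxE.
have H0 : forall a, D a a = 0.
  by move=> a'; have := H a' a' 0; rewrite normr0 ler01 qf_expand !(mul0r, rmorph0, addr0, mulr0) => ->.
have H1 := H a b 1; rewrite normr1 lexx qf_expand rmorph1 !mul1r !H0 add0r addr0 in H1.
have Hi := H a b 'i; rewrite normCi lexx qf_expand conjCi !H0 add0r !mulr0 addr0 in Hi.
have e1 : D b a = - D a b.
  by apply/eqP; rewrite -subr_eq0 opprK addrC (H1 erefl).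
have := Hi erefl; rewrite e1 mulNr mulrN opprK => /eqP.
rewrite -mulrDr mulf_eq0 (negbTE (neq0Ci _)) /= -mulr2n -mulr_natr mulf_eq0.
by rewrite pnatr_eq0 orbF => /eqP.
Qed.

Lemma psd_conj p q (W : 'M[C]_(p, q)) (M : 'M[C]_q) :
  psdmx M -> psdmx (W *m M *m W ^t*).
Proof.
case=> hM qM; split.
  by rewrite !trC_mul trmxCK hM mulmxA.
move=> v; have := qM (W ^t* *m v).
by rewrite trC_mul trmxCK !mulmxA.
Qed.

End Mx.
Section DM.
Variable R : realType.
Local Notation C := (R[i]).
Variable n : nat.
Implicit Types rho sig : 'M[C]_n.

Definition Sset rho sig := [set mu : R | loewner_le rho ((mu%:C)%C *: sig)].

Lemma LB rho sig mu : \tr rho = 1 -> \tr sig = 1 ->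
  loewner_le rho ((mu%:C)%C *: sig) -> 1 <= mu.
Proof.
move=> hr hs /psd_tr; rewrite linearB /= linearZ /= hs hr mulr1.
have -> : ((mu%:C)%C - 1 : C) = ((mu - 1)%:C)%C by rewrite rmorphB rmorph1.
by rewrite ler0c subr_ge0.
Qed.

Lemma log2_ge0 (x : R) : 1 <= x -> 0 <= log2 x.
Proof.
move=> h; apply: divr_ge0; first exact: ln_ge0.
by apply: ln_ge0; rewrite ler1n.
Qed.

Lemma ln2_gt0 : 0 < ln (2%:R : R).
Proof. by apply: ln_gt0; rewrite ltr1n. Qed.

Lemma log2_lt (x y : R) : 0 < x -> 0 < y -> (log2 x < log2 y) = (x < y).
Proof.
move=> hx hy; rewrite /log2 ltr_pM2r ?invr_gt0 ?ln2_gt0 //.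
by rewrite ltr_ln ?posrE.
Qed.

Lemma log2_le (x y : R) : 0 < x -> 0 < y -> (log2 x <= log2 y) = (x <= y).
Proof.
move=> hx hy; rewrite /log2 ler_pM2r ?invr_gt0 ?ln2_gt0 //.
by rewrite ler_ln ?posrE.
Qed.

Lemma Sset_lb rho sig : \tr rho = 1 -> \tr sig = 1 -> lbound (Sset rho sig) 1.
Proof. by move=> hr hs mu; apply: LB. Qed.

Lemma inf_ge1 rho sig : \tr rho = 1 -> \tr sig = 1 -> Sset rho sig !=set0 ->
  1 <= inf (Sset rho sig).
Proof. by move=> hr hs ne; apply: lb_le_inf => //; apply: Sset_lb. Qed.

Lemma Dmax_ge0 rho sig : \tr rho = 1 -> \tr sig = 1 -> (0 <= Dmax rho sig)%E.
Proof.
move=> hr hs; rewrite /Dmax; case: asboolP => [ne|_]; last exact: leey.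
by rewrite lee_fin; apply: log2_ge0; apply: inf_ge1.
Qed.

Lemma Dmax_lt rho sig (t : R) : \tr rho = 1 -> \tr sig = 1 -> 1 < t ->
  (Dmax rho sig < (log2 t)%:E)%E ->
  exists mu, [/\ 1 <= mu, mu < t & loewner_le rho ((mu%:C)%C *: sig)].
Proof.
move=> hr hs ht; rewrite /Dmax; case: asboolP => [ne|_]; last by rewrite ltNge leey.
rewrite lte_fin log2_lt; last 2 first.
- by apply: lt_le_trans (inf_ge1 hr hs ne).
- by apply: lt_trans ht.
move=> /(inf_lt ne) [mu Smu lt]; exists mu; split => //.
exact: LB Smu.
Qed.

Lemma Dmax_le_log rho sig mu : \tr rho = 1 -> \tr sig = 1 ->
  loewner_le rho ((mu%:C)%C *: sig) -> (Dmax rho sig <= (log2 mu)%:E)%E.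
Proof.
move=> hr hs hm; rewrite /Dmax; case: asboolP => [ne|]; last first.
  by case; exists mu.
have h1 := inf_ge1 hr hs ne.
have hmu : 1 <= mu by apply: LB hm.
rewrite lee_fin log2_le; last 2 first.
- by apply: lt_le_trans h1.
- by apply: lt_le_trans hmu.
by apply: ge_inf => //; exists 1; apply: Sset_lb.
Qed.

End DM.

Lemma Dmax_mono (R : realType) n m (rho sig : 'M[R[i]]_n) (rho' sig' : 'M[R[i]]_m) :
  \tr rho = 1 -> \tr sig = 1 -> \tr rho' = 1 -> \tr sig' = 1 ->
  (forall mu, loewner_le rho ((mu%:C)%C *: sig) ->
              loewner_le rho' ((mu%:C)%C *: sig')) ->
  (Dmax rho' sig' <= Dmax rho sig)%E.
Proof.
move=> hr hs hr' hs' himp; rewrite [X in (_ <= X)%E]/Dmax.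
case: asboolP => [ne|_]; last exact: leey.
have [mu0 Smu0] := ne.
rewrite /Dmax; case: asboolP => [ne'|]; last by case; exists mu0; apply: himp.
have h1 := inf_ge1 hr hs ne.
have h1' := inf_ge1 hr' hs' ne'.
rewrite lee_fin log2_le; last 2 first.
- by apply: lt_le_trans h1'.
- by apply: lt_le_trans h1.
apply: lb_le_inf => // mu Smu.
by apply: ge_inf; [exists 1; apply: Sset_lb | apply: himp].
Qed.

Section Big.
Variable R : realType.
Variable X : finType.

Lemma bigmax_ge (F : X -> \bar R) x : (F x <= \big[Order.max/-oo%E]_(y : X) F y)%E.
Proof. by rewrite (bigD1 x) //= le_max lexx. Qed.

Lemma bigmax_le (F : X -> \bar R) c : (forall x, F x <= c)%E ->
  (\big[Order.max/-oo%E]_(y : X) F y <= c)%E.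
Proof.
move=> h; elim/big_ind: _ => //; first exact: leNye.
by move=> a b ha hb; rewrite ge_max ha hb.
Qed.

Lemma bigmax_mono (F G : X -> \bar R) : (forall x, F x <= G x)%E ->
  (\big[Order.max/-oo%E]_(y : X) F y <= \big[Order.max/-oo%E]_(y : X) G y)%E.
Proof.
by move=> h; apply: bigmax_le => x; apply: le_trans (h x) (bigmax_ge _ _).
Qed.

Lemma einf_mono (T : Type) (P : set T) (f g : T -> \bar R) :
  (forall t, P t -> f t <= g t)%E ->
  (ereal_inf [set f t | t in P] <= ereal_inf [set g t | t in P])%E.
Proof.
move=> h; apply: le_ereal_inf_tmp => _ [t Pt <-].
by apply: le_trans (h t Pt); apply: ereal_inf_lbound; exists t.
Qed.

Lemma real_of (z : R[i]) : 0 <= z -> z = ((complex.Re z)%:C)%C.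
Proof. by case: z => a b; rewrite lecE /= => /andP [/eqP -> _]. Qed.

Lemma tr_sigma n (rho : X -> 'M[R[i]]_n) (pi : X -> R) :
  (forall x, \tr (rho x) = 1) -> pmf pi ->
  \tr (\sum_(x' : X) ((pi x')%:C)%C *: rho x') = 1.
Proof.
move=> hr [_ hs]; rewrite raddf_sum.
rewrite /=.
under eq_bigr do rewrite mxtraceZ hr mulr1.
by rewrite -rmorph_sum hs rmorph1.
Qed.

End Big.
Lemma small_zero (R : realType) (d : R) :
  (forall e, 0 < e -> e <= 1 -> `|d| <= 12%:R * e) -> d = 0.
Proof.
move=> H; have [//|hd] := eqVneq d 0; exfalso.
have hD : 0 < `|d| by rewrite normr_gt0.
set D := `|d| in hD H.
have h24 : 0 < 24%:R + D by apply: addr_gt0 => //; rewrite ltr0n.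
set e := D / (24%:R + D).
have he : 0 < e by apply: divr_gt0.
have he1 : e <= 1 by rewrite ler_pdivrMr // mul1r lerDr ler0n.
have hE : e * (24%:R + D) = D by rewrite divfK // gt_eqF.
have := H e he he1; rewrite -/D => h.
have : D * (24%:R + D) <= 12%:R * e * (24%:R + D).
  by apply: ler_wpM2r => //; apply: ltW.
rewrite -mulrA hE; nra.
Qed.

Lemma real_fin (R : realType) (e mu mu' sg r r' al al' : R) :
  0 < e -> e <= 1 -> 1 <= mu -> mu < 1 + e -> 1 <= mu' -> mu' < 1 + e ->
  0 <= al -> al <= 4%:R * (mu - 1) -> 0 <= al' -> al' <= 4%:R * (mu' - 1) ->
  0 <= r -> r <= 4%:R -> 0 <= r' -> r' <= 4%:R ->
  mu * sg = r + al -> mu' * sg = r' + al' -> `|r - r'| <= 12%:R * e.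
Proof.
move=> he he1 m1 m2 m1' m2' a0 a4 a0' a4' r0 r4 r0' r4' Emu Emu'.
have mu0 : 0 < mu by lra.
have sg0 : 0 <= sg by rewrite -(pmulr_rge0 _ mu0) Emu; lra.
have sg8 : sg <= 8%:R.
  have : sg <= mu * sg by rewrite ler_peMl.
  rewrite Emu; lra.
have d1 : mu - mu' <= e by lra.
have d2 : mu' - mu <= e by lra.
have p1 : mu * sg - mu' * sg <= 8%:R * e.
  rewrite -mulrBl; apply: (le_trans (y := e * sg)); first exact: ler_wpM2r.
  by rewrite mulrC; apply: ler_wpM2r => //; apply: ltW.
have p2 : mu' * sg - mu * sg <= 8%:R * e.
  rewrite -mulrBl; apply: (le_trans (y := e * sg)); first exact: ler_wpM2r.
  by rewrite mulrC; apply: ler_wpM2r => //; apply: ltW.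
rewrite ler_norml; apply/andP; split; lra.
Qed.

Section A3.
Variables (R : realType) (X : finType) (n : nat) (rho : X -> 'M[R[i]]_n).
Hypothesis dens : forall x, density (rho x).
Local Notation sig pi := (\sum_(x' : X) ((pi x')%:C)%C *: rho x').

Lemma trrho x : \tr (rho x) = 1.
Proof. by case: (dens x). Qed.

Lemma leak_small (d : R) : 0 < d -> leakage rho = 0%E ->
  exists pi, pmf pi /\ forall x, exists mu,
    [/\ 1 <= mu, mu < 1 + d & loewner_le (rho x) ((mu%:C)%C *: sig pi)].
Proof.
move=> hd h0.
have hlt : (leakage rho < (log2 (1 + d))%:E)%E.
  rewrite h0 lte_fin.
  have := @log2_lt R 1 (1 + d) ltr01 _.
  rewrite {1}/log2 ln1 mul0r => ->; last by rewrite addr_gt0.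
  by rewrite ltrDl.
case: (ereal_inf_lt hlt) => _ [pi Ppi <-] hF.
exists pi; split => // x.
apply: Dmax_lt.
- exact: trrho.
- by apply: tr_sigma => //; apply: trrho.
- by rewrite ltrDl.
- exact: le_lt_trans (bigmax_ge _ x) hF.
Qed.

Lemma qf_rho_bounds x (v : 'cV[R[i]]_n) a b c : v = delta_mx a 0 + c *: delta_mx b 0 ->
  `|c| <= 1 ->
  exists r : R, [/\ qf (rho x) v = (r%:C)%C, 0 <= r & r <= 4%:R].
Proof.
move=> -> hc; have hp : psdmx (rho x) by case: (dens x).
have h0 := qf_psd (delta_mx a 0 + c *: delta_mx b 0) hp.
have E := real_of h0.
exists (complex.Re (qf (rho x) (delta_mx a 0 + c *: delta_mx b 0))).
have h4 := qf_bound a b hp hc; rewrite trrho mulr1 E in h4.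
split => //; first by rewrite -ler0c; rewrite -E.
by rewrite -lecR rmorph_nat.
Qed.

Lemma step (pi : X -> R) y (v : 'cV[R[i]]_n) a b c mu (r : R) :
  v = delta_mx a 0 + c *: delta_mx b 0 -> `|c| <= 1 ->
  qf (rho y) v = (r%:C)%C ->
  loewner_le (rho y) ((mu%:C)%C *: sig pi) -> pmf pi ->
  exists al : R, [/\ 0 <= al, al <= 4%:R * (mu - 1) &
     (mu%:C)%C * qf (sig pi) v = ((r + al)%:C)%C].
Proof.
move=> ev hc hr hA hpi.
have hs : \tr (sig pi) = 1 by apply: tr_sigma => //; apply: trrho.
set A := (mu%:C)%C *: sig pi - rho y in hA.
have h0 := qf_psd v hA.
have E := real_of h0.
exists (complex.Re (qf A v)); split.
- by rewrite -ler0c -E.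
- have := qf_bound a b hA hc; rewrite -ev E.
  rewrite /A linearB /= mxtraceZ hs mulr1 trrho.
  have -> : ((mu%:C)%C - 1 : R[i]) = ((mu - 1)%:C)%C by rewrite rmorphB rmorph1.
  by rewrite -(rmorph_nat (real_complex R)) -rmorphM lecR.
- rewrite rmorphD /= -E -hr /A /qf bfMB bfMZ.
  by rewrite addrC subrK.
Qed.

Lemma key x x' a b c : `|c| <= 1 -> leakage rho = 0%E ->
  qf (rho x) (delta_mx a 0 + c *: delta_mx b 0) =
  qf (rho x') (delta_mx a 0 + c *: delta_mx b 0).
Proof.
move=> hc h0.
have [r [Er r0 r4]] := qf_rho_bounds x (v := delta_mx a 0 + c *: delta_mx b 0) (erefl _) hc.
have [r' [Er' r0' r4']] := qf_rho_bounds x' (v := delta_mx a 0 + c *: delta_mx b 0) (erefl _) hc.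
suff hrr : r = r' by rewrite Er Er' hrr.
apply/eqP; rewrite -subr_eq0; apply/eqP; apply: small_zero => e he he1.
case: (leak_small he h0) => pi [Ppi H].
case: (H x) => mu [m1 m2 hA]; case: (H x') => mu' [m1' m2' hA'].
have [al [al0 al4 Eal]] := step (v := delta_mx a 0 + c *: delta_mx b 0) (erefl _) hc Er hA Ppi.
have [al' [al0' al4' Eal']] := step (v := delta_mx a 0 + c *: delta_mx b 0) (erefl _) hc Er' hA' Ppi.
have mu0 : mu != 0 by rewrite gt_eqF // (lt_le_trans ltr01).
have muC : (mu%:C)%C != 0 :> R[i] by rewrite eq_complex /= negb_and mu0.
have Es : qf (sig pi) (delta_mx a 0 + c *: delta_mx b 0) = (((r + al) / mu)%:C)%C.
  apply: (mulfI muC); rewrite Eal -rmorphM /=.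
  by rewrite mulrC divfK.
have Emu : mu * ((r + al) / mu) = r + al by rewrite mulrC divfK.
have Emu' : mu' * ((r + al) / mu) = r' + al'.
  by apply: complexI; rewrite rmorphM /= -Es.
exact: real_fin Emu Emu'.
Qed.

Lemma a3 : leakage rho = 0%E -> forall x x', rho x = rho x'.
Proof.
move=> h0 x x'; apply/eqP; rewrite -subr_eq0; apply/eqP; apply: polarize => a b c hc.
by rewrite /qf bfMB -/(qf _ _) -/(qf _ _) (key x x' a b hc h0) subrr.
Qed.

End A3.
Section Chan.
Variable R : realType.
Local Notation C := (R[i]).

Lemma sum_delta q (F : 'I_q -> C) a : \sum_(i < q) (a == i)%:R * F i = F a.
Proof.
rewrite (bigD1 a) //= eqxx mul1r big1 ?addr0 // => i hi.
by rewrite eq_sym (negbTE hi) mul0r.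
Qed.

Lemma sum_delta_r q (F : 'I_q -> C) a : \sum_(i < q) F i * ((a == i)%:R)^* = F a.
Proof.
rewrite -[RHS](sum_delta F a); apply: eq_bigr => i _.
by rewrite rmorph_nat mulrC.
Qed.

Definition selmx p q (g : 'I_p -> 'I_q) : 'M[C]_(p, q) := \matrix_(k, a) ((g k == a)%:R).

Lemma selmxE p q (g : 'I_p -> 'I_q) (A : 'M[C]_q) k l :
  (selmx g *m A *m (selmx g) ^t*) k l = A (g k) (g l).
Proof.
rewrite mxE.
under eq_bigr do rewrite !mxE.
under eq_bigr do under eq_bigr do rewrite mxE.
under eq_bigr do rewrite sum_delta.
by rewrite sum_delta_r.
Qed.

Lemma cp_pos n m (E : {linear 'M[C]_n -> 'M[C]_m}) :
  completely_positive E -> forall A, psdmx A -> psdmx (E A).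
Proof.
move=> cp A pA.
pose g := fun k : 'I_(1 * n) => (mxtens_unindex k).2.
pose f := fun a : 'I_m => @mxtens_index 1 m (ord0, a).
have pM := psd_conj (selmx g) pA.
have := cp 1%N _ pM.
rewrite /ampliation !big_ord1.
have -> : block (selmx g *m A *m (selmx g) ^t*) ord0 ord0 = A.
  apply/matrixP => a b; rewrite mxE selmxE /g !mxtens_indexK //.
move=> /(psd_conj (selmx f)).
suff -> : selmx f *m tensmx (delta_mx ord0 ord0 : 'M[C]_1) (E A) *m (selmx f) ^t* = E A by [].
apply/matrixP => a b; rewrite selmxE /f tensmxE mxE !eqxx mul1r //.
Qed.

Lemma loewner_E n m (E : {linear 'M[C]_n -> 'M[C]_m}) A B :
  completely_positive E -> loewner_le A B -> loewner_le (E A) (E B).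
Proof. by move=> cp hAB; rewrite /loewner_le -linearB; apply: cp_pos. Qed.

Lemma unitary_inv n (U : 'M[C]_n) : U \is unitarymx -> U ^t* *m U = 1%:M.
Proof. by move=> hU; rewrite -[U ^t*]mul1mx mulmxKtV. Qed.

Lemma loewner_U n (U : 'M[C]_n) A B : U \is unitarymx ->
  loewner_le A B <-> loewner_le (U *m A *m U ^t*) (U *m B *m U ^t*).
Proof.
move=> hU; rewrite /loewner_le; split.
  by move=> h; rewrite -mulmxBl -mulmxBr; apply: psd_conj.
move=> /(psd_conj (U ^t*)); rewrite trmxCK.
have uu := unitary_inv hU.
rewrite -mulmxBl -mulmxBr !mulmxA uu mul1mx -mulmxA uu mulmx1.
done.
Qed.

Lemma tr_U n (U : 'M[C]_n) A : U \is unitarymx -> \tr (U *m A *m U ^t*) = \tr A.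
Proof. by move=> hU; rewrite mxtrace_mulC mulmxA unitary_inv // mul1mx. Qed.

End Chan.
Lemma psd0 (R : realType) n : psdmx (0 : 'M[R[i]]_n).
Proof.
split; first by rewrite linear0 map_mx0.
by move=> v; rewrite mulmx0 mul0mx mxE.
Qed.

Lemma leak_mono (R : realType) (X : finType) n m (rho : X -> 'M[R[i]]_n)
  (rho' : X -> 'M[R[i]]_m) :
  (forall pi, pmf pi ->
    (\big[Order.max/-oo%E]_(x : X) Dmax (rho' x) (\sum_(x' : X) ((pi x')%:C)%C *: rho' x') <=
     \big[Order.max/-oo%E]_(x : X) Dmax (rho x) (\sum_(x' : X) ((pi x')%:C)%C *: rho x'))%E) ->
  (leakage rho' <= leakage rho)%E.
Proof. by move=> h; rewrite /leakage; apply: einf_mono. Qed.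

Theorem theorem1 (R : realType) (X : finType) (n : nat)
  (rho : X -> 'M[R[i]]_n) :
  (0 < #|X|)%N ->
  (forall x, density (rho x)) ->
  ((0 <= leakage rho)%E /\
     (leakage rho = 0%E <-> (forall x x' : X, rho x = rho x'))) /\
  (forall U : 'M[R[i]]_n, U \is unitarymx ->
     leakage (fun x => U *m rho x *m U ^t*) = leakage rho) /\
  (forall (m : nat) (E : {linear 'M[R[i]]_n -> 'M[R[i]]_m}),
     quantum_channel E ->
     (leakage (fun x => E (rho x)) <= leakage rho)%E).
Proof.
move=> /card_gt0P [x0 _] dens.
have tr1 := trrho dens.
have a1 : (0 <= leakage rho)%E.
  apply: le_ereal_inf_tmp => _ [pi Ppi <-].
  apply: le_trans (bigmax_ge _ x0).
  by apply: Dmax_ge0 => //; apply: tr_sigma.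
split; [split => //; split|split].
- exact: a3.
- move=> heq; apply/le_anti; rewrite a1 andbT.
  pose pi0 := fun x : X => if x == x0 then 1 else 0 : R.
  have Ppi0 : pmf pi0.
    split; first by move=> x; rewrite /pi0; case: eqP => _; [exact: ler01 | exact: lexx].
    rewrite (bigD1 x0) //= /pi0 eqxx big1 ?addr0 // => x /negbTE -> //.
  apply: ge_ereal_inf; exists (\big[Order.max/-oo%E]_(x : X)
      Dmax (rho x) (\sum_(x' : X) ((pi0 x')%:C)%C *: rho x')); first by exists pi0.
  have -> : \sum_(x' : X) ((pi0 x')%:C)%C *: rho x' = rho x0.
    rewrite (bigD1 x0) //= /pi0 eqxx rmorph1 scale1r big1 ?addr0 // => x /negbTE ->.
    by rewrite rmorph0 scale0r.
  apply: bigmax_le => x.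
  have -> : (0 : \bar R) = (log2 (1 : R))%:E by rewrite /log2 ln1 mul0r.
  apply: Dmax_le_log => //; rewrite rmorph1 scale1r (heq x x0) /loewner_le subrr.
  exact: psd0.
- move=> U hU.
  have Feq : forall pi, pmf pi ->
    \big[Order.max/-oo%E]_(x : X) Dmax (U *m rho x *m U ^t*)
        (\sum_(x' : X) ((pi x')%:C)%C *: (U *m rho x' *m U ^t*)) =
    \big[Order.max/-oo%E]_(x : X) Dmax (rho x)
        (\sum_(x' : X) ((pi x')%:C)%C *: rho x').
    move=> pi Ppi; apply: eq_bigr => x _.
    have -> : \sum_(x' : X) ((pi x')%:C)%C *: (U *m rho x' *m U ^t*) =
              U *m (\sum_(x' : X) ((pi x')%:C)%C *: rho x') *m U ^t*.
      rewrite mulmx_sumr mulmx_suml; apply: eq_bigr => x' _.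
      by rewrite scalemxAl scalemxAr.
    have ts := tr_sigma tr1 Ppi.
    have t1 := tr_U (rho x) hU; rewrite tr1 in t1.
    have t2 := tr_U (\sum_(x' : X) ((pi x')%:C)%C *: rho x') hU; rewrite ts in t2.
    apply/le_anti/andP; split.
    + apply: (Dmax_mono (tr1 x) ts t1 t2) => mu /(loewner_U _ _ hU).
      by rewrite -scalemxAr -scalemxAl.
    + apply: (Dmax_mono t1 t2 (tr1 x) ts) => mu h; apply/(loewner_U _ _ hU).
      by rewrite -scalemxAr -scalemxAl.
  apply/le_anti/andP; split.
    apply: leak_mono.
    move=> pi Ppi.
    have H := Feq pi Ppi.
    exact: (eq_ind_r (fun z => (z <= _)%E) (lexx _) H).
  apply: leak_mono => pi Ppi.
  have H := Feq pi Ppi.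
  exact: (eq_ind_r (fun z => (_ <= z)%E) (lexx _) H).
- move=> m E [cp tp]; apply: leak_mono => pi Ppi.
  apply: bigmax_mono => x.
  have -> : \sum_(x' : X) ((pi x')%:C)%C *: E (rho x') =
            E (\sum_(x' : X) ((pi x')%:C)%C *: rho x').
    by rewrite linear_sum; apply: eq_bigr => x' _; rewrite linearZ.
  have ts := tr_sigma tr1 Ppi.
  apply: Dmax_mono; rewrite ?tp //.
  by move=> mu h; rewrite -linearZ; apply: loewner_E.
Qed.
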